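(* Let $\Delta=\{\{1,3\},\{1,5\},\{3,5\}\}\in\mathcal{T}_6$. Then $\chi(\mathrm{KG}(\mathcal{T}_6\setminus\{\Delta\}))=4$.
   Context: Label the vertices of a convex hexagon by $1,\dots,6$ in cyclic order; $\mathrm{Diag}_6 = \{\{i,j\} \subseteq [6]: i-j\not\equiv \pm1 \pmod 6\}$; a triangulation is identified with its set of (three) diagonals, and $\mathcal{T}_6$ is the set of triangulations. For a set system $\mathcal{F}$, $\mathrm{KG}(\mathcal{F})$ is the graph on $\mathcal{F}$ with $F,F'$ adjacent iff $F\cap F'=\emptyset$. *)

(* Defs.v *)
From mathcomp Require Import all_boot all_order.
Set Implicit Arguments. Unset Strict Implicit. Unset Printing Implicit Defensive.

(* Vertices of the convex hexagon: 'I_6, where i : 'I_6 stands for label i+1. *)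
Definition V6 := 'I_6.

Definition adj6 (i j : V6) : bool :=
  ((i + 1) %% 6 == j) || ((j + 1) %% 6 == i).

Definition is_diag (d : {set V6}) : bool :=
  [exists i : V6, exists j : V6, [&& i < j, ~~ adj6 i j & d == [set i; j]]].

(* Two diagonals {a,b}, {c,d} (a<b, c<d) cross iff their endpoints strictly
   interleave around the polygon: a < c < b < d or c < a < d < b. *)
Definition cross (d e : {set V6}) : bool :=
  [exists a : V6, exists b : V6, exists c : V6, exists f : V6,
    [&& d == [set a; b], e == [set c; f], a < c, c < b & b < f]] ||
  [exists a : V6, exists b : V6, exists c : V6, exists f : V6,
    [&& e == [set a; b], d == [set c; f], a < c, c < b & b < f]].

Definition noncrossing (T : {set {set V6}}) : bool :=
  [forall d in T, is_diag d] && [forall d in T, forall e in T, ~~ cross d e].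

(* Triangulations = maximal sets of pairwise non-crossing diagonals
   (each has exactly three diagonals). *)
Definition T6 : {set {set {set V6}}} :=
  [set T | noncrossing T &
     [forall U : {set {set V6}}, (noncrossing U && (T \subset U)) ==> (U == T)]].

Definition KG_adj (F F' : {set {set V6}}) : bool := [disjoint F & F'].

Definition proper_coloring (S : {set {set {set V6}}}) (k : nat)
    (c : {set {set V6}} -> 'I_k) : Prop :=
  forall F F', F \in S -> F' \in S -> KG_adj F F' -> c F <> c F'.

Definition colorable (S : {set {set {set V6}}}) (k : nat) : Prop :=
  exists c : {set {set V6}} -> 'I_k, proper_coloring S c.

Definition chromatic_number_is (S : {set {set {set V6}}}) (n : nat) : Prop :=
  colorable S n /\ forall k, colorable S k -> n <= k.

(* Delta = {{1,3},{1,5},{3,5}}, i.e. 0-based {{0,2},{0,4},{2,4}}. *)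
Definition Delta : {set {set V6}} :=
  [set [set (inord 0 : V6); inord 2]; [set (inord 0 : V6); inord 4];
       [set (inord 2 : V6); inord 4]].

(* Main.v *)
Require Import Defs.
From mathcomp Require Import all_boot all_order.
Set Implicit Arguments. Unset Strict Implicit.

Lemma set2_eq (T : finType) (a b c d : T) :
  ([set a; b] == [set c; d]) = ((a == c) && (b == d)) || ((a == d) && (b == c)).
Proof.
apply/eqP/idP.
- move=> H.
  have Ha : a \in [set c; d] by rewrite -H !inE eqxx.
  have Hb : b \in [set c; d] by rewrite -H !inE eqxx orbT.
  have Hc : c \in [set a; b] by rewrite H !inE eqxx.
  have Hd : d \in [set a; b] by rewrite H !inE eqxx orbT.
  rewrite !inE in Ha Hb Hc Hd.
  case/orP: Ha => /eqP ea; case/orP: Hb => /eqP eb; subst a b; rewrite !eqxx ?orbT //=.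
  + by case/orP: Hd => /eqP ->; rewrite eqxx ?andbT.
  + by case/orP: Hc => /eqP ->; rewrite eqxx.
- by case/orP => /andP[/eqP-> /eqP->] //; rewrite setUC.
Qed.

Definition o0 : V6 := @Ordinal 6 0 isT.
Definition o1 : V6 := @Ordinal 6 1 isT.
Definition o2 : V6 := @Ordinal 6 2 isT.
Definition o3 : V6 := @Ordinal 6 3 isT.
Definition o4 : V6 := @Ordinal 6 4 isT.
Definition o5 : V6 := @Ordinal 6 5 isT.
Definition vs : seq V6 := [:: o0; o1; o2; o3; o4; o5].
Arguments vs : simpl never.
Lemma mem_vs (a : V6) : a \in vs.
Proof.
case: a => [[|[|[|[|[|[|m]]]]]] H] //; rewrite !inE; apply/orP;
 do ?[by left; apply/eqP/val_inj | right; apply/orP]; by left; apply/eqP/val_inj.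
Qed.
Lemma existsV6E (P : pred V6) : [exists a, P a] = has P vs.
Proof.
apply/existsP/hasP => [[a Pa]|[a _ Pa]]; last by exists a.
by exists a => //; apply: mem_vs.
Qed.

Lemma eq_hasV (P Q : pred V6) : P =1 Q -> has P vs = has Q vs.
Proof. by move/eq_has->. Qed.

Definition s2 (x y a b : V6) := ((x == a) && (y == b)) || ((x == b) && (y == a)).

Definition crossS (x y u v : V6) :=
  has (fun a : V6 => has (fun b : V6 => has (fun c : V6 => has (fun f : V6 =>
     [&& s2 x y a b, s2 u v c f, a < c, c < b & b < f]) vs) vs) vs) vs ||
  has (fun a : V6 => has (fun b : V6 => has (fun c : V6 => has (fun f : V6 =>
     [&& s2 u v a b, s2 x y c f, a < c, c < b & b < f]) vs) vs) vs) vs.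

Lemma crossE x y u v : cross [set x; y] [set u; v] = crossS x y u v.
Proof.
rewrite /cross /crossS; congr orb;
rewrite existsV6E; apply: eq_hasV => a; cbv beta; rewrite existsV6E; apply: eq_hasV => b; cbv beta;
rewrite existsV6E; apply: eq_hasV => c; cbv beta; rewrite existsV6E; apply: eq_hasV => f; cbv beta;
by rewrite !set2_eq.
Qed.

Lemma cross_sym d e : cross d e = cross e d.
Proof. by rewrite /cross orbC. Qed.

Definition diagS (x y : V6) :=
  has (fun i : V6 => has (fun j : V6 => [&& i < j, ~~ adj6 i j & s2 x y i j]) vs) vs.

Lemma diagE x y : is_diag [set x; y] = diagS x y.
Proof.
rewrite /is_diag /diagS existsV6E; apply: eq_hasV => i; cbv beta; rewrite existsV6E;
apply: eq_hasV => j; cbv beta; by rewrite set2_eq.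
Qed.

Definition ps : seq (V6 * V6) :=
  [:: (o0,o2);(o0,o3);(o0,o4);(o1,o3);(o1,o4);(o1,o5);(o2,o4);(o2,o5);(o3,o5)].
Arguments ps : simpl never.
Definition D (p : V6 * V6) : {set V6} := [set p.1; p.2].
Definition dl := map D ps.
Definition eqD (p q : V6 * V6) := s2 p.1 p.2 q.1 q.2.
Definition cr (p q : V6 * V6) := crossS p.1 p.2 q.1 q.2.

Lemma crE p q : cross (D p) (D q) = cr p q.
Proof. exact: crossE. Qed.

Lemma memD p s : (D p \in map D s) = has (eqD p) s.
Proof. by rewrite -has_pred1 has_map; apply: eq_has => q /=; rewrite /D eq_sym set2_eq. Qed.

Lemma mem2 (i j : V6) s :
  ([set i; j] \in map D s) = has (fun q => s2 i j q.1 q.2) s.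
Proof. by rewrite -has_pred1 has_map; apply: eq_has => q /=; rewrite /D eq_sym set2_eq. Qed.

Lemma diag_dl d : is_diag d -> d \in dl.
Proof.
case/existsP => i /existsP [j /and3P [lt nad /eqP ->]].
have H : all (fun i : V6 => all (fun j : V6 => ((i < j) && ~~ adj6 i j) ==>
   has (fun q => s2 i j q.1 q.2) ps) vs) vs by vm_compute.
rewrite /dl mem2.
by move/allP: H => /(_ i (mem_vs i)) /allP /(_ j (mem_vs j)) /implyP; apply; rewrite lt.
Qed.

Lemma sub_dl T : noncrossing T -> {subset T <= dl}.
Proof. by case/andP => /forall_inP H _ d /H; apply: diag_dl. Qed.

Lemma diagD p : p \in ps -> is_diag (D p).
Proof.
have H : all (fun p => diagS p.1 p.2) ps by vm_compute.
by move=> pin; rewrite /D diagE; move/allP: H; apply.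
Qed.

Lemma crrefl p : p \in ps -> ~~ cr p p.
Proof.
have H : all (fun p => ~~ cr p p) ps by vm_compute.
by move=> pin; move/allP: H; apply.
Qed.

Lemma eq_allps (P Q : pred (V6 * V6)) : P =1 Q -> all P ps = all Q ps.
Proof. by move/eq_all->. Qed.
Lemma eq_hasps (P Q : pred (V6 * V6)) : P =1 Q -> has P ps = has Q ps.
Proof. by move/eq_has->. Qed.

Section Sub.
Variable F : {set {set V6}}.
Hypothesis HF : {subset F <= dl}.

Lemma forall_dl (P : pred {set V6}) :
  [forall d in F, P d] = all (fun p => (D p \in F) ==> P (D p)) ps.
Proof.
apply/forall_inP/allP => [H p _ | H d dF].
- by apply/implyP => /H.
- have /mapP[p pin dE] := HF dF; rewrite dE in dF *.
  exact: (implyP (H p pin) dF).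
Qed.

Lemma noncrossingE :
  noncrossing F = all (fun p => (D p \in F) ==> all (fun q => (D q \in F) ==> ~~ cr p q) ps) ps.
Proof.
rewrite /noncrossing forall_dl.
have -> : all (fun p => (D p \in F) ==> is_diag (D p)) ps.
  by apply/allP => p pin; rewrite diagD ?implybT.
rewrite andTb forall_dl; apply: eq_allps => p; cbv beta; congr (_ ==> _).
by rewrite forall_dl; apply: eq_allps => q; cbv beta; rewrite crE.
Qed.
End Sub.

Definition goodm (m : pred (V6 * V6)) :=
  all (fun p => m p ==> all (fun q => m q ==> ~~ cr p q) ps) ps &&
  all (fun p => ~~ m p ==> has (fun q => m q && cr p q) ps) ps.

Lemma Dps p : p \in ps -> D p \in dl.
Proof. by move=> pin; apply: map_f. Qed.

Lemma T6E (F : {set {set V6}}) : {subset F <= dl} -> (F \in T6) = goodm (fun p => D p \in F).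
Proof.
move=> HF; rewrite inE /goodm -noncrossingE //.
case NF: (noncrossing F); rewrite ?andTb ?andFb //.
apply/forallP/allP.
- move=> H p pin; apply/implyP => pF; apply/negPn/negP => hn.
  have NU : noncrossing (D p |: F).
    move: NF => /andP[/forall_inP ND /forall_inP NC].
    apply/andP; split.
      apply/forall_inP => d; rewrite !inE => /orP[/eqP->|/ND //]; exact: diagD.
    have key : forall e, e \in F -> ~~ cross (D p) e.
      move=> e eF; have /mapP[q qin eE] := HF e eF; rewrite eE crE.
      apply/negP => cpq; apply: (negP hn); apply/hasP; exists q => //.
      by rewrite -eE eF cpq.
    apply/forall_inP => d; rewrite !inE => /orP[/eqP->|dF];
      apply/forall_inP => e; rewrite !inE => /orP[/eqP->|eF].
    + by rewrite crE crrefl.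
    + exact: key.
    + by rewrite cross_sym key.
    + exact: (forall_inP (NC d dF) e eF).
  have := H (D p |: F); rewrite NU subsetUr /= => /eqP E.
  by move: pF; rewrite -E !inE eqxx.
- move=> H U; apply/implyP => /andP[NU FU].
  rewrite eqEsubset FU andbT; apply/subsetP => d dU.
  have /mapP[p pin dE] := sub_dl NU dU; subst d.
  apply/negPn/negP => pF.
  have /hasP[q qin /andP[qF cpq]] := implyP (H p pin) pF.
  move: NU => /andP[_ /forall_inP NC].
  have := forall_inP (NC _ dU) (D q) (subsetP FU _ qF).
  by rewrite crE cpq.
Qed.

Definition bits (F : {set {set V6}}) := [seq D p \in F | p <- ps].
Definition mb (b : seq bool) (p : V6 * V6) := nth false b (index p ps).

Lemma mbE F p : p \in ps -> mb (bits F) p = (D p \in F).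
Proof.
move=> pin; rewrite /mb /bits (nth_map (o0,o0)) ?index_mem // nth_index //.
Qed.

Lemma goodm_eq m1 m2 : {in ps, m1 =1 m2} -> goodm m1 = goodm m2.
Proof.
move=> E; rewrite /goodm; congr andb; apply: eq_in_all => p pin; rewrite E //;
 congr (_ ==> _).
- by apply: eq_in_all => q qin; rewrite E.
- by apply: eq_in_has => q qin; rewrite E.
Qed.

Definition goodb b := goodm (mb b).

Lemma T6b (F : {set {set V6}}) : {subset F <= dl} -> (F \in T6) = goodb (bits F).
Proof. by move=> HF; rewrite T6E // /goodb; apply: goodm_eq => p pin; rewrite mbE. Qed.

Lemma bits_inj (F F' : {set {set V6}}) : {subset F <= dl} -> {subset F' <= dl} -> bits F = bits F' -> F = F'.
Proof.
move=> HF HF' E; apply/setP => d.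
case dl_d: (d \in dl).
- have /mapP[p pin ->] := dl_d.
  by rewrite -!mbE // E.
- apply/idP/idP => /[dup] h; [move/HF | move/HF']; by rewrite dl_d.
Qed.

Definition disjb (b b' : seq bool) := all2 (fun x y => ~~ (x && y)) b b'.

Lemma all2_map (T : Type) (f g : T -> bool) (r : rel bool) s :
  all2 r (map f s) (map g s) = all (fun x => r (f x) (g x)) s.
Proof. by elim: s => //= x s ->. Qed.

Lemma disj_bits (F F' : {set {set V6}}) : [disjoint F & F'] -> disjb (bits F) (bits F').
Proof.
move=> H; rewrite /disjb /bits all2_map; apply/allP => p _ /=.
by apply/negP => /andP[h1 h2]; rewrite (disjointFr H h1) in h2.
Qed.

Lemma bits_disj (F F' : {set {set V6}}) : {subset F <= dl} -> disjb (bits F) (bits F') -> [disjoint F & F'].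
Proof.
move=> HF; rewrite /disjb /bits all2_map => /allP H; rewrite disjoint_subset.
apply/subsetP => d dF; rewrite inE; apply/negP => dF'.
have /mapP[p pin dE] := HF d dF; subst d.
by move: (H p pin); rewrite /= dF dF'.
Qed.

Fixpoint allseq (T : Type) (vals : seq T) n : seq (seq T) :=
  if n is n'.+1 then [seq x :: s | x <- vals, s <- allseq vals n'] else [:: [::]].

Lemma mem_allseq (T : eqType) (vals : seq T) s :
  all (mem vals) s -> s \in allseq vals (size s).
Proof.
elim: s => [|x s IH] /=; first by rewrite inE.
by case/andP => xv /IH sv; apply: (allpairs_f (fun x s => x :: s) xv sv).
Qed.

Lemma size_bits F : size (bits F) = 9.
Proof. by rewrite size_map. Qed.

Lemma mem_bits F : bits F \in allseq [:: true; false] 9.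
Proof.
rewrite -(size_bits F); apply: mem_allseq; apply/allP => x _; by case: x.
Qed.

Definition dcode := [:: true; false; true; false; false; false; true; false; false].
Definition V13 : seq (seq bool) := [:: [:: true; true; true; false; false; false; false; false; false];
 [:: true; true; false; false; false; false; false; false; true];
 [:: true; false; false; false; false; false; true; true; false];
 [:: true; false; false; false; false; false; false; true; true];
 [:: false; true; true; true; false; false; false; false; false];
 [:: false; true; false; true; false; false; false; false; true];
 [:: false; false; true; true; true; false; false; false; false];
 [:: false; false; true; false; true; false; true; false; false];
 [:: false; false; false; true; true; true; false; false; false];
 [:: false; false; false; true; false; true; false; false; true];
 [:: false; false; false; false; true; true; true; false; false];
 [:: false; false; false; false; false; true; true; true; false];
 [:: false; false; false; false; false; true; false; true; true]].
Definition cols : seq nat := [:: 0; 0; 0; 0; 1; 1; 1; 2; 1; 1; 2; 2; 3].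
Definition col (b : seq bool) : 'I_4 :=
  @Ordinal 4 (nth 0 cols (index b V13) %% 4) (@ltn_pmod _ 4 isT).
Definition W10 : seq (seq bool) := [:: [:: true; true; true; false; false; false; false; false; false];
 [:: true; true; false; false; false; false; false; false; true];
 [:: true; false; false; false; false; false; true; true; false];
 [:: false; true; false; true; false; false; false; false; true];
 [:: false; false; true; true; true; false; false; false; false];
 [:: false; false; true; false; true; false; true; false; false];
 [:: false; false; false; true; true; true; false; false; false];
 [:: false; false; false; true; false; true; false; false; true];
 [:: false; false; false; false; false; true; true; true; false];
 [:: false; false; false; false; false; true; false; true; true]].
Definition El : seq (nat * nat) := [:: (0,6); (0,7); (0,8); (0,9); (1,4); (1,5); (1,6); (1,8); (2,3); (2,4); (2,6); (2,7); (3,5); (3,8); (4,8); (4,9); (5,7); (5,9)].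

Definition crl : seq ((V6 * V6) * (V6 * V6)) := [:: ((o0,o2),(o1,o3)); ((o0,o2),(o1,o4)); ((o0,o2),(o1,o5)); ((o0,o3),(o1,o4)); ((o0,o3),(o1,o5)); ((o0,o3),(o2,o4)); ((o0,o3),(o2,o5)); ((o0,o4),(o1,o5)); ((o0,o4),(o2,o5)); ((o0,o4),(o3,o5)); ((o1,o3),(o0,o2)); ((o1,o3),(o2,o4)); ((o1,o3),(o2,o5)); ((o1,o4),(o0,o2)); ((o1,o4),(o0,o3)); ((o1,o4),(o2,o5)); ((o1,o4),(o3,o5)); ((o1,o5),(o0,o2)); ((o1,o5),(o0,o3)); ((o1,o5),(o0,o4)); ((o2,o4),(o0,o3)); ((o2,o4),(o1,o3)); ((o2,o4),(o3,o5)); ((o2,o5),(o0,o3)); ((o2,o5),(o0,o4)); ((o2,o5),(o1,o3)); ((o2,o5),(o1,o4)); ((o3,o5),(o0,o4)); ((o3,o5),(o1,o4)); ((o3,o5),(o2,o4))].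
Definition crt p q := (p, q) \in crl.
Lemma crtE p q : p \in ps -> q \in ps -> cr p q = crt p q.
Proof.
have H : all (fun p => all (fun q => cr p q == crt p q) ps) ps by vm_compute.
by move=> pin qin; apply/eqP; move/allP: H => /(_ p pin) /allP /(_ q qin).
Qed.
Definition goodt (m : pred (V6 * V6)) :=
  all (fun p => m p ==> all (fun q => m q ==> ~~ crt p q) ps) ps &&
  all (fun p => ~~ m p ==> has (fun q => m q && crt p q) ps) ps.
Lemma goodtE m : goodm m = goodt m.
Proof.
rewrite /goodm /goodt; apply: (f_equal2 andb).
- apply: eq_in_all => p pin; apply: (f_equal2 implb (erefl _)).
  by apply: eq_in_all => q qin; rewrite crtE.
- apply: eq_in_all => p pin; apply: (f_equal2 implb (erefl _)).
  by apply: eq_in_has => q qin; rewrite crtE.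
Qed.

Lemma Vcheck : all (fun b => goodt (mb b) ==> (b != dcode) ==> (b \in V13)) (allseq [:: true; false] 9).
Proof. vm_compute. reflexivity. Qed.

Lemma inord_o (k : nat) (H : k < 6) : (inord k : V6) = Ordinal H.
Proof. by apply: val_inj; rewrite /= inordK. Qed.

Lemma DeltaE : Delta = [set D (o0, o2); D (o0, o4); D (o2, o4)].
Proof. by rewrite /Delta (@inord_o 0 isT) (@inord_o 2 isT) (@inord_o 4 isT). Qed.

Lemma Delta_sub : {subset Delta <= dl}.
Proof. by move=> d; rewrite DeltaE !inE => /orP[/orP[]|] /eqP ->; rewrite eqxx ?orbT. Qed.

Lemma bits_Delta : bits Delta = dcode.
Proof.
rewrite DeltaE /bits.
rewrite (eq_map (g := fun p => [|| eqD p (o0, o2), eqD p (o0, o4) | eqD p (o2, o4)])).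
  by vm_compute.
by move=> p; rewrite !inE /D /eqD /s2 !set2_eq; do !case: (_ == _).
Qed.

Lemma in_V13 (F : {set {set V6}}) : F \in T6 :\ Delta -> bits F \in V13.
Proof.
rewrite in_setD1 => /andP[nD FT].
have HF : {subset F <= dl} by apply: sub_dl; move: FT; rewrite inE => /andP[].
have nb : bits F != dcode.
  apply/eqP => E; move/eqP: nD; apply; apply: bits_inj HF Delta_sub _.
  by rewrite E bits_Delta.
move: FT; rewrite T6b // /goodb goodtE => g.
by move/allP: Vcheck => /(_ _ (mem_bits F)); rewrite g nb.
Qed.

Lemma sub_T6 (F : {set {set V6}}) : F \in T6 :\ Delta -> {subset F <= dl}.
Proof. by rewrite in_setD1 => /andP[_]; rewrite inE => /andP[/sub_dl]. Qed.

Lemma colcheck : all (fun b => all (fun b' => disjb b b' ==> (col b != col b')) V13) V13.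
Proof. by vm_compute. Qed.

Lemma upper : colorable (T6 :\ Delta) 4.
Proof.
exists (fun F => col (bits F)) => F F' FS F'S dj.
have h1 := in_V13 FS; have h2 := in_V13 F'S.
have := disj_bits dj.
move/allP: colcheck => /(_ _ h1) /allP /(_ _ h2) /implyP H /H /eqP; done.
Qed.

Definition dec (b : seq bool) : {set {set V6}} := [set d | d \in mask b dl].

Lemma dec_sub b : {subset dec b <= dl}.
Proof. by move=> d; rewrite inE => /mem_mask. Qed.

Lemma bits_dec b : bits (dec b) = [seq has (eqD p) (mask b ps) | p <- ps].
Proof. by apply: eq_map => p; rewrite inE /dl -map_mask memD. Qed.

Lemma Wcheck : all (fun b => ([seq has (eqD p) (mask b ps) | p <- ps] == b) &&
   goodt (mb b) && (b != dcode)) W10.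
Proof. by vm_compute. Qed.

Lemma W_in b : b \in W10 -> (bits (dec b) = b) /\ dec b \in T6 :\ Delta.
Proof.
move=> bW; move/allP: Wcheck => /(_ b bW) /andP[/andP[/eqP E g] nd].
have Eb : bits (dec b) = b by rewrite bits_dec.
split => //.
rewrite in_setD1 T6b; last exact: dec_sub.
rewrite /goodb goodtE Eb g andbT.
apply/eqP => E'; move: nd; by rewrite -Eb E' bits_Delta eqxx.
Qed.

Definition o3s : seq 'I_3 := [:: @Ordinal 3 0 isT; @Ordinal 3 1 isT; @Ordinal 3 2 isT].
Lemma mem_o3s (a : 'I_3) : a \in o3s.
Proof.
case: a => [[|[|[|m]]] H] //; rewrite !inE; apply/orP;
 do ?[by left; apply/eqP/val_inj | right; apply/orP]; by left; apply/eqP/val_inj.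
Qed.

Lemma Echeck : all (fun e => [&& e.1 < 10, e.2 < 10 & disjb (nth [::] W10 e.1) (nth [::] W10 e.2)]) El.
Proof. by vm_compute. Qed.

Lemma col3check : all (fun ys => ~~ all (fun e => nth (@Ordinal 3 0 isT) ys e.1 != nth (@Ordinal 3 0 isT) ys e.2) El)
   (allseq o3s 10).
Proof. by vm_compute. Qed.

Lemma no3 (c : {set {set V6}} -> 'I_3) : ~ proper_coloring (T6 :\ Delta) c.
Proof.
move=> Pc.
set ys := [seq c (dec b) | b <- W10].
have ysin : ys \in allseq o3s 10.
  have -> : 10 = size ys by rewrite size_map.
  by apply: mem_allseq; apply/allP => x _; apply: mem_o3s.
move/allP: col3check => /(_ _ ysin) /negP; apply.
apply/allP => e eE.
move/allP: Echeck => /(_ e eE) /and3P[l1 l2 dj].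
rewrite !(nth_map [::]) ?size_map //.
have m1 : nth [::] W10 e.1 \in W10 by apply: mem_nth.
have m2 : nth [::] W10 e.2 \in W10 by apply: mem_nth.
have [E1 S1] := W_in m1; have [E2 S2] := W_in m2.
apply/eqP; apply: Pc S1 S2 _.
by apply: bits_disj; [apply: dec_sub | rewrite E1 E2].
Qed.

Theorem proposition3p6 : chromatic_number_is (T6 :\ Delta) 4.
Proof.
split; first exact: upper.
move=> k [c Pc]; rewrite leqNgt; apply/negP => lk.
have lk3 : k <= 3 by [].
apply: (@no3 (fun F => widen_ord lk3 (c F))) => F F' h1 h2 dj E.
apply: (Pc F F' h1 h2 dj); apply: val_inj; move: E => /(congr1 val) /=.
done.
Qed.
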